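(* Let $F : \mathsf{Set} \to \mathsf{Set}$ be a finitary functor which preserves pullbacks of monomorphisms. Let $\rho$ be an uncountable regular ordinal. Then $F$ preserves $\rho^{\mathrm{op}}$-indexed limits: for every functor $X : \rho^{\mathrm{op}} \to \mathsf{Set}$ (i.e. a family of sets $(X_\alpha)_{\alpha<\rho}$ with restriction maps $X_\alpha \to X_\beta$ for $\beta \le \alpha$, compatible with composition), the canonical comparison map $F(\lim_{\alpha<\rho} X_\alpha) \to \lim_{\alpha<\rho} F(X_\alpha)$ is a bijection.
   Context: A functor $F:\mathsf{Set}\to\mathsf{Set}$ is finitary if it preserves directed colimits. $F$ preserves pullbacks of monomorphisms if for every pullback square $A \to B$, $A \to C$, $B \rightarrowtail D$, $C \to D$ in $\mathsf{Set}$ in which $B \to D$ is a monomorphism, the image of the square under $F$ is again a pullback square. An ordinal $\rho$ is regular if it is a limit ordinal equal to its own cofinality (every subset of $\rho$ of cardinality smaller than $\rho$ is bounded in $\rho$); here $\rho$ is moreover assumed uncountable. The ordinal $\rho$ is viewed as a poset category, and $\rho^{\mathrm{op}}$ is its opposite. *)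

(* Defs.v *)
Record SetFunctor := {
  Fob : Type -> Type;
  fmap : forall (A B : Type), (A -> B) -> Fob A -> Fob B;
  fmap_id : forall (A : Type) (x : Fob A), fmap A A (fun a => a) x = x;
  fmap_comp : forall (A B C : Type) (f : A -> B) (g : B -> C) (x : Fob A),
      fmap A C (fun a => g (f a)) x = fmap B C g (fmap A B f x)
}.

Arguments fmap s {A B} _ _.

Definition is_mono {B D : Type} (f : B -> D) : Prop :=
  forall (Z : Type) (g h : Z -> B), (forall z, f (g z) = f (h z)) ->
    forall z, g z = h z.

Definition is_pullback {A B C D : Type}
  (p : A -> B) (q : A -> C) (f : B -> D) (g : C -> D) : Prop :=
  (forall a, f (p a) = g (q a)) /\
  forall (Z : Type) (z1 : Z -> B) (z2 : Z -> C),
    (forall z, f (z1 z) = g (z2 z)) ->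
    exists u : Z -> A,
      (forall z, p (u z) = z1 z /\ q (u z) = z2 z) /\
      forall u' : Z -> A, (forall z, p (u' z) = z1 z /\ q (u' z) = z2 z) ->
        forall z, u' z = u z.

Definition preserves_mono_pullbacks (F : SetFunctor) : Prop :=
  forall (A B C D : Type) (p : A -> B) (q : A -> C) (f : B -> D) (g : C -> D),
    is_mono f -> is_pullback p q f g ->
    is_pullback (fmap F p) (fmap F q) (fmap F f) (fmap F g).

Definition is_directed {I : Type} (le : I -> I -> Prop) : Prop :=
  (forall i, le i i) /\ (forall i j k, le i j -> le j k -> le i k) /\
  (exists i : I, True) /\ (forall i j, exists k, le i k /\ le j k).

Definition is_diagram {I : Type} (le : I -> I -> Prop) (D : I -> Type)
  (d : forall i j, le i j -> D i -> D j) : Prop :=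
  (forall i (h : le i i) x, d i i h x = x) /\
  (forall i j k (hij : le i j) (hjk : le j k) (hik : le i k) x,
      d j k hjk (d i j hij x) = d i k hik x).

Definition is_cocone {I : Type} {le : I -> I -> Prop} {D : I -> Type}
  (d : forall i j, le i j -> D i -> D j) {C : Type} (c : forall i, D i -> C) : Prop :=
  forall i j (h : le i j) x, c j (d i j h x) = c i x.

Definition is_colimit {I : Type} {le : I -> I -> Prop} {D : I -> Type}
  (d : forall i j, le i j -> D i -> D j) {C : Type} (c : forall i, D i -> C) : Prop :=
  is_cocone d c /\
  forall (Y : Type) (y : forall i, D i -> Y), is_cocone d y ->
    exists u : C -> Y, (forall i x, u (c i x) = y i x) /\
      forall u' : C -> Y, (forall i x, u' (c i x) = y i x) -> forall z, u' z = u z.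

Definition finitary (F : SetFunctor) : Prop :=
  forall (I : Type) (le : I -> I -> Prop) (D : I -> Type)
         (d : forall i j, le i j -> D i -> D j) (C : Type) (c : forall i, D i -> C),
    is_directed le -> is_diagram le D d -> is_colimit d c ->
    is_colimit (D := fun i => Fob F (D i))
               (fun i j h => fmap F (d i j h)) (fun i => fmap F (c i)).

(** * Ordinals, represented by well-ordered types: rho = (T, lt) *)
Definition is_well_order {T : Type} (lt : T -> T -> Prop) : Prop :=
  well_founded lt /\ (forall x y z, lt x y -> lt y z -> lt x z) /\
  (forall x y, lt x y \/ x = y \/ lt y x).

Definition ord_le {T : Type} (lt : T -> T -> Prop) (x y : T) : Prop :=
  lt x y \/ x = y.

Definition is_limit_ordinal {T : Type} (lt : T -> T -> Prop) : Prop :=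
  (exists x : T, True) /\ forall a, exists b, lt a b.

(** Every subset S of rho of cardinality smaller than rho (i.e. injecting into
    some alpha = {x | x < alpha} with alpha < rho) is bounded in rho. *)
Definition is_regular_ordinal {T : Type} (lt : T -> T -> Prop) : Prop :=
  is_limit_ordinal lt /\
  forall (S : T -> Prop) (a : T) (h : T -> T),
    (forall s, S s -> lt (h s) a) ->
    (forall s1 s2, S s1 -> S s2 -> h s1 = h s2 -> s1 = s2) ->
    exists b, forall s, S s -> lt s b.

Definition is_uncountable (T : Type) : Prop :=
  ~ exists f : T -> nat, forall x y, f x = f y -> x = y.

Definition is_op_diagram {T : Type} (lt : T -> T -> Prop) (X : T -> Type)
  (r : forall a b, ord_le lt b a -> X a -> X b) : Prop :=
  (forall a (h : ord_le lt a a) x, r a a h x = x) /\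
  (forall a b c (hba : ord_le lt b a) (hcb : ord_le lt c b) (hca : ord_le lt c a) x,
      r b c hcb (r a b hba x) = r a c hca x).

Definition op_limit {T : Type} (lt : T -> T -> Prop) (X : T -> Type)
  (r : forall a b, ord_le lt b a -> X a -> X b) : Type :=
  { x : forall a, X a | forall a b (h : ord_le lt b a), r a b h (x a) = x b }.

Definition comparison (F : SetFunctor) {T : Type} (lt : T -> T -> Prop)
  (X : T -> Type) (r : forall a b, ord_le lt b a -> X a -> X b)
  (y : Fob F (op_limit lt X r)) : forall a, Fob F (X a) :=
  fun a => fmap F (fun l : op_limit lt X r => proj1_sig l a) y.

(* Main.v *)
Require Import Defs.
From Stdlib Require Import List Lia Classical ClassicalEpsilon ProofIrrelevance FunctionalExtensionality PropExtensionality.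
Import ListNotations.

Definition decb (P : Prop) : bool :=
  proj1_sig (constructive_indefinite_description (fun b : bool => if b then P else ~ P)
    (match classic P with or_introl p => ex_intro _ true p | or_intror n => ex_intro _ false n end)).

Lemma decb_spec (P : Prop) : decb P = true <-> P.
Proof.
  unfold decb. destruct (constructive_indefinite_description _ _) as [b Hb]; simpl.
  destruct b; split; intros; auto; try discriminate; contradiction.
Qed.

Definition supports (F : SetFunctor) {A : Type} (P : A -> Prop) (w : Fob F A) : Prop :=
  exists u : Fob F {a | P a}, fmap F (@proj1_sig A P) u = w.

Lemma sig_eq {A} {P : A -> Prop} (x y : {a | P a}) : proj1_sig x = proj1_sig y -> x = y.
Proof. destruct x, y; simpl; intros ->. f_equal. apply proof_irrelevance. Qed.

Lemma mono_proj1 A (P : A -> Prop) : is_mono (@proj1_sig A P).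
Proof. intros Z g h H z. apply sig_eq, H. Qed.

Lemma S_ext F {A} (P Q : A -> Prop) w : (forall a, P a <-> Q a) -> supports F P w -> supports F Q w.
Proof. intros H. assert (P = Q) by (extensionality a; apply propositional_extensionality; auto). subst; auto. Qed.

Lemma S_mono F {A} (P Q : A -> Prop) w : (forall a, P a -> Q a) -> supports F P w -> supports F Q w.
Proof.
  intros H [u Hu].
  exists (fmap F (fun x : {a | P a} => exist Q (proj1_sig x) (H _ (proj2_sig x))) u).
  rewrite <- fmap_comp. exact Hu.
Qed.

Lemma S_image F {A B} (f : A -> B) (P : A -> Prop) w :
  supports F P w -> supports F (fun b => exists a, P a /\ f a = b) (fmap F f w).
Proof.
  intros [u Hu]. subst w.
  exists (fmap F (fun x : {a | P a} => exist (fun b => exists a, P a /\ f a = b) (f (proj1_sig x)) (ex_intro _ (proj1_sig x) (conj (proj2_sig x) eq_refl))) u).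
  rewrite <- !fmap_comp. reflexivity.
Qed.

Lemma S_list_image F {A B} (f : A -> B) (l : list A) w :
  supports F (fun a => In a l) w -> supports F (fun b => In b (map f l)) (fmap F f w).
Proof.
  intros H. apply S_image with (f := f) in H. eapply S_ext; [|exact H].
  intros b. rewrite in_map_iff. firstorder.
Qed.

Lemma F_mono F (HP : preserves_mono_pullbacks F) {B D} (f : B -> D) :
  is_mono f -> forall x y, fmap F f x = fmap F f y -> x = y.
Proof.
  intros Hm x y Hxy.
  assert (Hpb : is_pullback (fun b : B => b) (fun b => b) f f).
  { split. - intros; reflexivity.
    - intros Z z1 z2 Hz. exists z1. split.
      + intros z. split; [reflexivity| apply (Hm Z z1 z2 Hz)].
      + intros u' Hu' z. apply (proj1 (Hu' z)). }
  destruct (HP _ _ _ _ _ _ _ _ Hm Hpb) as [_ H].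
  destruct (H unit (fun _ => x) (fun _ => y) (fun _ => Hxy)) as [u [Hu _]].
  destruct (Hu tt) as [H1 H2]. rewrite fmap_id in H1, H2. congruence.
Qed.

Lemma S_pullback F (HP : preserves_mono_pullbacks F) {A B} (f : A -> B) (Q : B -> Prop) w :
  supports F Q (fmap F f w) -> supports F (fun a => Q (f a)) w.
Proof.
  intros [v Hv].
  set (p := fun x : {a | Q (f a)} => exist Q (f (proj1_sig x)) (proj2_sig x)).
  assert (Hpb : is_pullback p (@proj1_sig A (fun a => Q (f a))) (@proj1_sig B Q) f).
  { split. - intros; reflexivity.
    - intros Z z1 z2 Hz.
      assert (Hq : forall z, Q (f (z2 z))) by (intro z; rewrite <- Hz; apply proj2_sig).
      exists (fun z => exist (fun a => Q (f a)) (z2 z) (Hq z)). split.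
      + intros z; split; [apply sig_eq; simpl; symmetry; apply Hz | reflexivity].
      + intros u' Hu' z. apply sig_eq. simpl. apply (proj2 (Hu' z)). }
  destruct (HP _ _ _ _ _ _ _ _ (mono_proj1 _ _) Hpb) as [_ H].
  destruct (H unit (fun _ => v) (fun _ => w) (fun _ => Hv)) as [u [Hu _]].
  exists (u tt). apply (proj2 (Hu tt)).
Qed.

Lemma S_inter F (HP : preserves_mono_pullbacks F) {A} (P Q : A -> Prop) w :
  supports F P w -> supports F Q w -> supports F (fun a => P a /\ Q a) w.
Proof.
  intros [u Hu] HQ. subst w.
  pose proof (S_pullback F HP (@proj1_sig A P) Q u HQ) as H1.
  pose proof (S_image F (@proj1_sig A P) _ u H1) as H2.
  eapply S_ext; [|exact H2]. intros a; split.
  - intros [[a' Pa'] [Hq Heq]]. simpl in *. subst. auto.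
  - intros [Pa Qa]. exists (exist _ a Pa). auto.
Qed.

Lemma fin_support F (HF : finitary F) {A : Type} (w : Fob F A) :
  exists l : list A, supports F (fun a => In a l) w.
Proof.
  set (D := fun l : list A => {a | In a l}).
  set (d := fun (l1 l2 : list A) (h : incl l1 l2) (x : D l1) =>
              exist (fun a => In a l2) (proj1_sig x) (h _ (proj2_sig x)) : D l2).
  set (c := fun l (x : D l) => proj1_sig x).
  assert (Hdir : is_directed (@incl A)).
  { split; [apply incl_refl|]. split; [intros i j k; apply incl_tran|].
    split; [exists nil; auto|]. intros i j; exists (i ++ j); split; [apply incl_appl|apply incl_appr]; apply incl_refl. }
  assert (Hdiag : is_diagram (@incl A) D d).
  { split; intros; apply sig_eq; reflexivity. }
  assert (Hcol : is_colimit d c).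
  { split. - intros i j h x. reflexivity.
    - intros Y y Hy. exists (fun a => y [a] (exist _ a (or_introl eq_refl))). split.
      + intros i [a p]. assert (h : incl [a] i) by (intros b [<-|[]]; exact p).
        rewrite <- (Hy [a] i h). f_equal. apply sig_eq. reflexivity.
      + intros u' Hu' z. exact (Hu' [z] (exist _ z (or_introl eq_refl))). }
  destruct (HF _ _ D d A c Hdir Hdiag Hcol) as [_ Huniv].
  destruct (Huniv Prop (fun _ _ => True)) as [u [Hu Huu]].
  { red; intros; reflexivity. }
  assert (E1 := Huu (fun w => exists l v, fmap F (c l) v = w)).
  assert (E2 := Huu (fun _ => True)).
  assert (H : (exists l v, fmap F (c l) v = w) = True).
  { assert (Hc1 : forall i x, (fun w => exists l v, fmap F (c l) v = w) (fmap F (c i) x) = True).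
    { intros i x. apply propositional_extensionality. split; auto. intros _; eauto. }
    pose proof (E1 Hc1 w) as e1. pose proof (E2 (fun _ _ => eq_refl) w) as e2.
    simpl in e1, e2. congruence. }
  assert (H' : exists l v, fmap F (c l) v = w) by (rewrite H; auto).
  destruct H' as [l [v Hv]]. exists l, v. exact Hv.
Qed.

Lemma min_list {A} (P : list A -> Prop) : (exists l, P l) -> exists l, P l /\ forall l', P l' -> length l <= length l'.
Proof.
  intros [l Hl].
  remember (length l) as n eqn:En. revert l Hl En.
  induction n as [n IH] using (well_founded_induction Wf_nat.lt_wf).
  intros l Hl En.
  destruct (classic (exists l', P l' /\ length l' < length l)) as [[l' [H1 H2]]|Hno].
  - apply (IH (length l')) with l'; [lia | auto | auto].
  - exists l. split; auto. intros l' Hl'. destruct (PeanoNat.Nat.le_gt_cases (length l) (length l')); auto. exfalso; apply Hno; eauto.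
Qed.

Lemma nodup_reduce {A} (l : list A) : ~ NoDup l -> exists l', (forall x, In x l' <-> In x l) /\ length l' < length l.
Proof.
  induction l as [|a t IH]; intros Hn.
  - exfalso; apply Hn; constructor.
  - destruct (classic (In a t)) as [Hi|Hi].
    + exists t. split; [intros x; simpl; split; [auto| intros [<-|H]; auto] | simpl; lia].
    + assert (~ NoDup t) by (intro; apply Hn; constructor; auto).
      destruct (IH H) as [t' [H1 H2]]. exists (a :: t'). split; [intros x; simpl; rewrite H1; tauto | simpl; lia].
Qed.

Lemma filter_len_le {A} (f : A -> bool) l : length (filter f l) <= length l.
Proof. induction l; simpl; [lia|]. destruct (f a); simpl; lia. Qed.

Lemma filter_short {A} (f : A -> bool) l : (exists x, In x l /\ f x = false) -> length (filter f l) < length l.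
Proof.
  induction l as [|a t IH]; simpl; intros [x [Hx Hf]]; [contradiction|].
  destruct Hx as [<-|Hx].
  - rewrite Hf. pose proof (filter_len_le f t). lia.
  - assert (length (filter f t) < length t) by eauto. destruct (f a); simpl; lia.
Qed.

Lemma nodup_map_inj {A B} (f : A -> B) l : NoDup (map f l) -> forall x y, In x l -> In y l -> f x = f y -> x = y.
Proof.
  induction l as [|a t IH]; simpl; intros Hn x y Hx Hy Hxy; [contradiction|].
  inversion Hn as [|b s Hb Hs]; subst.
  destruct Hx as [<-|Hx], Hy as [<-|Hy]; auto.
  - exfalso; apply Hb. rewrite Hxy. apply in_map; auto.
  - exfalso; apply Hb. rewrite <- Hxy. apply in_map; auto.
Qed.

Definition minsup F {A} (w : Fob F A) (l : list A) :=
  supports F (fun a => In a l) w /\ forall l', supports F (fun a => In a l') w -> length l <= length l'.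

Lemma minsup_ex F (HF : finitary F) {A} (w : Fob F A) : exists l, minsup F w l.
Proof. apply min_list. apply fin_support; auto. Qed.

Lemma minsup_nodup F {A} (w : Fob F A) l : minsup F w l -> NoDup l.
Proof.
  intros [H1 H2]. apply NNPP; intros Hn. destruct (nodup_reduce l Hn) as [l' [E L]].
  assert (supports F (fun a => In a l') w) by (eapply S_ext; [|exact H1]; intros; rewrite E; tauto).
  specialize (H2 _ H). lia.
Qed.

Lemma minsup_least F (HP : preserves_mono_pullbacks F) {A} (w : Fob F A) l (Q : A -> Prop) :
  minsup F w l -> supports F Q w -> forall x, In x l -> Q x.
Proof.
  intros [H1 H2] HQ x Hx. apply NNPP; intros Hn.
  set (f := fun a => decb (Q a)).
  assert (supports F (fun a => In a (filter f l)) w).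
  { eapply S_ext; [|exact (S_inter F HP _ _ w H1 HQ)]. intros a. rewrite filter_In. unfold f. rewrite decb_spec. tauto. }
  specialize (H2 _ H). assert (length (filter f l) < length l); [|lia].
  apply filter_short. exists x; split; auto. unfold f. destruct (decb (Q x)) eqn:E; auto. exfalso; apply Hn; apply decb_spec; exact E.
Qed.

Lemma wo_irrefl {T} (R : T -> T -> Prop) : well_founded R -> forall x, ~ R x x.
Proof.
  intros Hwf x. induction x as [x IH] using (well_founded_ind Hwf). intros H. exact (IH x H H).
Qed.

Lemma wo_least {T} (R : T -> T -> Prop) : is_well_order R ->
  forall P : T -> Prop, (exists x, P x) -> exists m, P m /\ forall x, P x -> ord_le R m x.
Proof.
  intros [Hwf [Htr Htri]] P [x Hx]. revert Hx. induction x as [x IH] using (well_founded_ind Hwf). intros Hx.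
  destruct (classic (exists y, P y /\ R y x)) as [[y [Hy Ry]]|Hno].
  - exact (IH y Ry Hy).
  - exists x. split; auto. intros y Hy. destruct (Htri x y) as [H|[H|H]].
    + left; auto.
    + right; auto.
    + exfalso; eauto.
Qed.

Lemma ole_trans {T} (R : T -> T -> Prop) : is_well_order R -> forall x y z, ord_le R x y -> ord_le R y z -> ord_le R x z.
Proof.
  intros [_ [Htr _]] x y z [H1|H1] [H2|H2]; subst; unfold ord_le; eauto.
Qed.

Lemma ole_lt_trans {T} (R : T -> T -> Prop) : is_well_order R -> forall x y z, ord_le R x y -> R y z -> R x z.
Proof. intros [_ [Htr _]] x y z [H1|H1] H2; subst; eauto. Qed.

Lemma ub2 {T} (R : T -> T -> Prop) : is_well_order R -> forall x y, exists z, ord_le R x z /\ ord_le R y z.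
Proof.
  intros [_ [_ Htri]] x y. destruct (Htri x y) as [H|[H|H]].
  - exists y; split; [left|right]; auto.
  - exists y; split; right; auto.
  - exists x; split; [right|left]; auto.
Qed.

Lemma ole_total {T} (R : T -> T -> Prop) : is_well_order R -> forall x y, ord_le R x y \/ ord_le R y x.
Proof. intros [_ [_ Htri]] x y. destruct (Htri x y) as [H|[H|H]]; [left;left|left;right|right;left]; auto. Qed.

Lemma countable_bounded {T} (R : T -> T -> Prop) : is_well_order R -> is_regular_ordinal R -> is_uncountable T ->
  forall g : nat -> T, exists b, forall k, R (g k) b.
Proof.
  intros Hwo Hreg Hunc g.
  pose proof Hwo as [Hwf [Htr Htri]].
  destruct Hreg as [[[x0 _] Hsucc] Hbnd].
  destruct (constructive_indefinite_description _ (wo_least R Hwo (fun _ => True) (ex_intro _ x0 I))) as [z0 [_ Hz0]].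
  set (nxt := fun t => proj1_sig (constructive_indefinite_description _ (wo_least R Hwo (fun b => R t b) (Hsucc t)))).
  assert (Hn1 : forall t, R t (nxt t)) by (intro t; exact (proj1 (proj2_sig (constructive_indefinite_description _ (wo_least R Hwo (fun b => R t b) (Hsucc t)))))).
  assert (Hn2 : forall t b, R t b -> ord_le R (nxt t) b) by (intro t; exact (proj2 (proj2_sig (constructive_indefinite_description _ (wo_least R Hwo (fun b => R t b) (Hsucc t)))))).
  set (e := fun k => Nat.iter k nxt z0).
  assert (He : forall j k, j < k -> R (e j) (e k)).
  { intros j k Hjk. induction Hjk.
    - apply Hn1.
    - eapply Htr; [exact IHHjk| apply Hn1]. }
  assert (Heinj : forall j k, e j = e k -> j = k).
  { intros j k E. destruct (PeanoNat.Nat.lt_trichotomy j k) as [H|[H|H]]; auto; exfalso.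
    - pose proof (He _ _ H). rewrite E in H0. eapply wo_irrefl; eauto.
    - pose proof (He _ _ H). rewrite E in H0. eapply wo_irrefl; eauto. }
  assert (Hcov : forall k t, ord_le R t (e k) -> exists j, t = e j).
  { induction k as [|k IH]; intros t Ht.
    - exists 0. destruct Ht as [Ht|Ht]; auto. exfalso. destruct (Hz0 t I) as [H|H].
      + eapply wo_irrefl; [exact Hwf|]. eapply Htr; eauto.
      + subst. eapply wo_irrefl; eauto.
    - destruct Ht as [Ht|Ht]; [|exists (S k); auto].
      apply IH. destruct (Htri t (e k)) as [H|[H|H]]; [left|right|]; auto.
      exfalso. pose proof (Hn2 _ _ H). change (e (S k)) with (nxt (e k)) in Ht.
      eapply wo_irrefl; [exact Hwf|]. eapply ole_lt_trans; eauto. }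
  assert (Hb : exists b, forall k, R (e k) b).
  { apply NNPP; intros Hn. apply Hunc.
    assert (Hall : forall t, exists j, t = e j).
    { intros t. apply NNPP; intros Hno. apply Hn. exists t. intros k.
      destruct (Htri (e k) t) as [H|[H|H]]; auto; exfalso; apply Hno.
      - exists k; auto.
      - eapply Hcov. left; eauto. }
    exists (fun t => proj1_sig (constructive_indefinite_description _ (Hall t))).
    intros x y Exy.
    destruct (constructive_indefinite_description _ (Hall x)) as [jx Hx].
    destruct (constructive_indefinite_description _ (Hall y)) as [jy Hy]. simpl in Exy. subst. auto. }
  destruct Hb as [b Hb].
  set (idx := fun s => epsilon (inhabits 0) (fun k => g k = s)).
  destruct (Hbnd (fun s => exists k, g k = s) b (fun s => e (idx s))) as [beta Hbeta].
  - intros; apply Hb.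
  - intros s1 s2 H1 H2 E. apply Heinj in E.
    pose proof (epsilon_spec (inhabits 0) (fun k => g k = s1) H1).
    pose proof (epsilon_spec (inhabits 0) (fun k => g k = s2) H2).
    unfold idx in E. congruence.
  - exists beta. intros k. apply Hbeta. eauto.
Qed.

Lemma fin_sep {T A} (R : T -> T -> Prop) (Hwo : is_well_order R) (Tinh : exists x : T, True)
  (P : T -> A -> A -> Prop)
  (Hup : forall al be a b, ord_le R al be -> P al a b -> P be a b)
  (Hp : forall a b, exists al, P al a b) :
  forall l, exists al, forall a b, In a l -> In b l -> P al a b.
Proof.
  destruct Tinh as [x0 _].
  induction l as [|a t IH].
  - exists x0; intros a b [].
  - destruct IH as [a1 Ha1].
    assert (Hin : forall t, exists al, forall b, In b t -> P al a b /\ P al b a).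
    { induction t0 as [|b t' IH'].
      - exists x0; intros b [].
      - destruct IH' as [a2 Ha2]. destruct (Hp a b) as [a3 Ha3]. destruct (Hp b a) as [a4 Ha4].
        destruct (ub2 R Hwo a2 a3) as [c1 [c1a c1b]]. destruct (ub2 R Hwo c1 a4) as [c2 [c2a c2b]].
        exists c2. intros b' [<-|Hb'].
        + split; [exact (Hup _ _ _ _ (ole_trans R Hwo _ _ _ c1b c2a) Ha3) | exact (Hup _ _ _ _ c2b Ha4)].
        + destruct (Ha2 b' Hb') as [Q1 Q2]; split; [exact (Hup _ _ _ _ (ole_trans R Hwo _ _ _ c1a c2a) Q1) | exact (Hup _ _ _ _ (ole_trans R Hwo _ _ _ c1a c2a) Q2)]. }
    destruct (Hin t) as [a2 Ha2]. destruct (Hp a a) as [a3 Ha3].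
    destruct (ub2 R Hwo a1 a2) as [c1 [c1a c1b]]. destruct (ub2 R Hwo c1 a3) as [c2 [c2a c2b]].
    exists c2. intros u v [<-|Hu] [<-|Hv].
    + exact (Hup _ _ _ _ c2b Ha3).
    + exact (Hup _ _ _ _ (ole_trans R Hwo _ _ _ c1b c2a) (proj1 (Ha2 v Hv))).
    + exact (Hup _ _ _ _ (ole_trans R Hwo _ _ _ c1b c2a) (proj2 (Ha2 u Hu))).
    + exact (Hup _ _ _ _ (ole_trans R Hwo _ _ _ c1a c2a) (Ha1 u v Hu Hv)).
Qed.

Theorem mainTheorem1 (F : SetFunctor)
  (HF : finitary F) (HP : preserves_mono_pullbacks F)
  (T : Type) (lt : T -> T -> Prop)
  (Hwo : is_well_order lt) (Hreg : is_regular_ordinal lt) (Hunc : is_uncountable T)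
  (X : T -> Type) (r : forall a b, ord_le lt b a -> X a -> X b)
  (HX : is_op_diagram lt X r) :
  (* the comparison map F(lim X) -> lim F X is injective ... *)
  (forall y1 y2 : Fob F (op_limit lt X r),
      (forall a, comparison F lt X r y1 a = comparison F lt X r y2 a) -> y1 = y2) /\
  (* ... and surjective onto the compatible families of lim F X *)
  (forall z : forall a, Fob F (X a),
      (forall a b (h : ord_le lt b a), fmap F (r a b h) (z a) = z b) ->
      exists y : Fob F (op_limit lt X r), forall a, comparison F lt X r y a = z a).
Proof.
  destruct HX as [Hid Hcomp].
  assert (Tinh : exists x : T, True) by (destruct Hreg as [[H _] _]; exact H).
  split.
  - intros y1 y2 Heq.
    destruct (fin_support F HF y1) as [l1 H1], (fin_support F HF y2) as [l2 H2].
    set (l := l1 ++ l2).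
    apply S_mono with (Q := fun t => In t l) in H1; [|intros; apply in_or_app; auto].
    apply S_mono with (Q := fun t => In t l) in H2; [|intros; apply in_or_app; auto].
    destruct H1 as [v1 Hv1], H2 as [v2 Hv2].
    destruct (fin_sep lt Hwo Tinh (fun al (t t' : op_limit lt X r) => proj1_sig t al = proj1_sig t' al -> t = t'))
      with (l := l) as [al Hal].
    + intros al be t t' Hle H E. apply H.
      rewrite <- (proj2_sig t be al Hle), <- (proj2_sig t' be al Hle), E. reflexivity.
    + intros t t'. destruct (classic (t = t')) as [E|E].
      * destruct Tinh as [x0 _]. exists x0; auto.
      * apply NNPP; intros Hn. apply E. apply sig_eq. extensionality be.
        apply NNPP; intros Hb. apply Hn. exists be; intros Hc; contradiction.
    + subst y1 y2. f_equal.
      apply (F_mono F HP (fun x : {t | In t l} => proj1_sig (proj1_sig x) al)).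
      * intros Z g h Hgh z0. apply sig_eq. apply Hal; auto; apply proj2_sig.
      * specialize (Heq al). unfold comparison in Heq. rewrite <- !fmap_comp in Heq. exact Heq.
  - intros z Hz.
    assert (Hrpi : forall a b (h h' : ord_le lt b a) x, r a b h x = r a b h' x)
      by (intros; rewrite (proof_irrelevance _ h h'); reflexivity).
    assert (Hm0 : forall be, exists l, minsup F (z be) l) by (intros; apply minsup_ex; auto).
    set (lmin := fun be => proj1_sig (constructive_indefinite_description _ (Hm0 be))).
    assert (Hm : forall be, minsup F (z be) (lmin be)) by (intros be; exact (proj2_sig (constructive_indefinite_description _ (Hm0 be)))).
    clearbody lmin.
    set (n := fun be => length (lmin be)).
    assert (Hmapsup : forall be ga (h : ord_le lt be ga),
               supports F (fun a => In a (map (r ga be h) (lmin ga))) (z be)).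
    { intros be ga h. rewrite <- (Hz ga be h). apply S_list_image. apply (proj1 (Hm ga)). }
    assert (Hmono : forall be ga, ord_le lt be ga -> n be <= n ga).
    { intros be ga h. unfold n. rewrite <- (length_map (r ga be h) (lmin ga)).
      apply (proj2 (Hm be)). apply Hmapsup. }
    assert (Hbd : exists N, forall be, n be <= N).
    { apply NNPP; intros Hn.
      assert (Hk : forall k, exists be, k < n be).
      { intros k. apply NNPP; intros Hk. apply Hn. exists k. intros be.
        destruct (PeanoNat.Nat.le_gt_cases (n be) k); auto. exfalso; eauto. }
      set (g := fun k => proj1_sig (constructive_indefinite_description _ (Hk k))).
      destruct (countable_bounded lt Hwo Hreg Hunc g) as [b Hb].
      pose proof (proj2_sig (constructive_indefinite_description _ (Hk (n b)))) as Hg. simpl in Hg.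
      pose proof (Hmono _ _ (or_introl (Hb (n b)))). unfold g in H. lia. }
    assert (Hmax : exists a0, forall be, n be <= n a0).
    { destruct Hbd as [N HN]. induction N as [|N IH].
      - destruct Tinh as [x0 _]. exists x0. intros be. specialize (HN be). lia.
      - destruct (classic (exists be, n be = S N)) as [[be Hbe]|Hno].
        + exists be. intros. rewrite Hbe. auto.
        + apply IH. intros be. specialize (HN be). destruct (PeanoNat.Nat.eq_dec (n be) (S N)); [exfalso; eauto|lia]. }
    destruct Hmax as [a0 Ha0].
    assert (Hc : forall be ga (h : ord_le lt be ga) x, In x (lmin ga) -> In (r ga be h x) (lmin be)).
    { intros be ga h x Hx.
      apply (minsup_least F HP (z ga) (lmin ga) (fun x => In (r ga be h x) (lmin be)) (Hm ga)); auto.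
      apply (S_pullback F HP (r ga be h) (fun y => In y (lmin be))). rewrite Hz. apply (proj1 (Hm be)). }
    assert (Hmin2 : forall be (h : ord_le lt a0 be), minsup F (z a0) (map (r be a0 h) (lmin be))).
    { intros be h. split; [apply Hmapsup|]. intros l' Hl'. rewrite length_map.
      pose proof (Hmono _ _ h). pose proof (Ha0 be). pose proof (proj2 (Hm a0) l' Hl'). unfold n in *. lia. }
    assert (Hinj : forall be (h : ord_le lt a0 be) x y, In x (lmin be) -> In y (lmin be) -> r be a0 h x = r be a0 h y -> x = y).
    { intros be h. apply nodup_map_inj. eapply minsup_nodup. apply Hmin2. }
    assert (Hsurj : forall be (h : ord_le lt a0 be) s, In s (lmin a0) -> exists x, In x (lmin be) /\ r be a0 h x = s).
    { intros be h s Hs.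
      pose proof (minsup_least F HP (z a0) (lmin a0) _ (Hm a0) (proj1 (Hmin2 be h)) s Hs) as H.
      apply in_map_iff in H. destruct H as [x [H1 H2]]. eauto. }
    set (Phi := fun (s : X a0) be (x : X be) => exists ga (h1 : ord_le lt a0 ga) (h2 : ord_le lt be ga) y,
                  In y (lmin ga) /\ r ga a0 h1 y = s /\ r ga be h2 y = x).
    assert (PhiEx : forall s, In s (lmin a0) -> forall be, exists x, Phi s be x).
    { intros s Hs be. destruct (ub2 lt Hwo a0 be) as [ga [h1 h2]].
      destruct (Hsurj ga h1 s Hs) as [y [Hy1 Hy2]]. exists (r ga be h2 y), ga, h1, h2, y; auto. }
    assert (PhiU : forall s be x1 x2, Phi s be x1 -> Phi s be x2 -> x1 = x2).
    { intros s be x1 x2 [g1 [h1 [h2 [y1 [Hy1 [E1 F1]]]]]] [g2 [k1 [k2 [y2 [Hy2 [E2 F2]]]]]].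
      destruct (ub2 lt Hwo g1 g2) as [ga [m1 m2]].
      assert (hg : ord_le lt a0 ga) by (eapply ole_trans; eauto).
      assert (Hs : In s (lmin a0)) by (rewrite <- E1; apply Hc; auto).
      destruct (Hsurj ga hg s Hs) as [y [Hy Ey]].
      assert (Y1 : r ga g1 m1 y = y1).
      { apply (Hinj g1 h1); auto. rewrite Hcomp with (hca := hg). congruence. }
      assert (Y2 : r ga g2 m2 y = y2).
      { apply (Hinj g2 k1); auto. rewrite Hcomp with (hca := hg). congruence. }
      assert (hb : ord_le lt be ga) by (eapply ole_trans; eauto).
      subst x1 x2. rewrite <- Y1, <- Y2, !(Hcomp _ _ _ _ _ hb). reflexivity. }
    set (S0 := {x : X a0 | In x (lmin a0)}).
    set (th := fun (s : S0) be => proj1_sig (constructive_indefinite_description _ (PhiEx (proj1_sig s) (proj2_sig s) be))).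
    assert (Hth : forall s be, Phi (proj1_sig s) be (th s be))
      by (intros s be; exact (proj2_sig (constructive_indefinite_description _ (PhiEx (proj1_sig s) (proj2_sig s) be)))).
    clearbody th.
    assert (Hcompat : forall s a b (h : ord_le lt b a), r a b h (th s a) = th s b).
    { intros s a b h. apply (PhiU (proj1_sig s) b); [|apply Hth].
      destruct (Hth s a) as [ga [h1 [h2 [y [Hy [E1 E2]]]]]].
      assert (hb : ord_le lt b ga) by (eapply ole_trans; eauto).
      exists ga, h1, hb, y. split; auto. split; auto. rewrite <- E2. symmetry; apply Hcomp. }
    set (phi := fun s : S0 => exist (fun x : forall a, X a => forall a b (h : ord_le lt b a), r a b h (x a) = x b)
                                  (fun be => th s be) (Hcompat s) : op_limit lt X r).
    destruct (proj1 (Hm a0)) as [u0 Hu0].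
    exists (fmap F phi u0). intros al. unfold comparison. rewrite <- fmap_comp. simpl.
    destruct (ole_total lt Hwo al a0) as [h|h].
    + assert (E : (fun s : S0 => th s al) = (fun s => r a0 al h (proj1_sig s))).
      { extensionality s. apply (PhiU (proj1_sig s) al); [apply Hth|].
        exists a0, (or_intror eq_refl), h, (proj1_sig s). split; [apply proj2_sig|]. split; auto. }
      rewrite E. rewrite fmap_comp. change (fun s : S0 => proj1_sig s) with (@proj1_sig _ (fun x => In x (lmin a0))).
      transitivity (fmap F (r a0 al h) (z a0)); [f_equal; exact Hu0 | apply Hz].
    + destruct (proj1 (Hm al)) as [ua Hua].
      set (rho := fun x : {x | In x (lmin al)} => exist (fun x => In x (lmin a0)) (r al a0 h (proj1_sig x)) (Hc a0 al h _ (proj2_sig x)) : S0).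
      assert (Hrho : fmap F rho ua = u0).
      { apply (F_mono F HP (@proj1_sig _ (fun x => In x (lmin a0)))); [apply mono_proj1|].
        rewrite Hu0, <- fmap_comp. simpl.
        change (fun x : {x | In x (lmin al)} => r al a0 h (proj1_sig x)) with (fun x : {x | In x (lmin al)} => r al a0 h (@proj1_sig _ (fun x => In x (lmin al)) x)).
        rewrite fmap_comp, Hua. apply Hz. }
      rewrite <- Hrho, <- fmap_comp.
      assert (E : (fun x => th (rho x) al) = @proj1_sig _ (fun x => In x (lmin al))).
      { extensionality x. apply (PhiU (proj1_sig (rho x)) al); [apply Hth|].
        exists al, h, (or_intror eq_refl), (proj1_sig x). split; [apply proj2_sig|]. split; auto. }
      rewrite E. exact Hua.
Qed.
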